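(* Let $\mathcal{H}$ be a finite-dimensional Hilbert space, $\mathcal{O}\in\mathcal{L}(\mathcal{H})$ Hermitian, $\rho$ a quantum state on $\mathcal{H}$, $n\geq1$ and $1\leq k\leq n$. Let \[\mathcal{O}_k=\frac{1}{n!}\sum_{\pi\in\mathfrak{S}_n}U_\pi\,U_{s_k}\,(\mathcal{O}\otimes I^{\otimes n-1})\,U_\pi^\dagger.\] Then $\mathbf{Var}[\mathcal{O}_k]\leq\dfrac{2k\|\mathcal{O}\|^2}{n}$, where $\|\mathcal{O}\|$ is the operator norm.
   Context: $\mathfrak{S}_n$ is the symmetric group on $\{1,\ldots,n\}$; for $\pi\in\mathfrak{S}_n$, $U_\pi$ is the unitary on $\mathcal{H}^{\otimes n}$ with $U_\pi\ket{\psi_1}\cdots\ket{\psi_n}=\ket{\psi_{\pi^{-1}(1)}}\cdots\ket{\psi_{\pi^{-1}(n)}}$. $s_k$ is the cyclic shift on the first $k$ elements ($s_k(i)=i+1$ for $i<k$, $s_k(k)=1$, $s_k(i)=i$ for $i>k$). For a Hermitian $\mathcal{Q}$ on $\mathcal{H}^{\otimes n}$, $\mathbf{Var}[\mathcal{Q}]=\operatorname{tr}(\mathcal{Q}^2\rho^{\otimes n})-\operatorname{tr}(\mathcal{Q}\rho^{\otimes n})^2$, the variance of the outcome of measuring $\rho^{\otimes n}$ with observable $\mathcal{Q}$. *)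

(* Defs.v *)
From HB Require Import structures.
From mathcomp Require Import all_boot all_order all_algebra all_fingroup.
From mathcomp Require Import complex.
From mathcomp Require Import classical_sets reals.
From mathcomp Require Import zify.
Set Implicit Arguments.
Unset Strict Implicit.
Unset Printing Implicit Defensive.
Import Order.TTheory GRing.Theory Num.Theory.
Local Open Scope ring_scope.

(* Hilbert space H = C^I for a finite basis type I (dim H = #|I|).
   H^{(x) n} = C^{T} with T = {ffun 'I_n -> I} (product basis).
   Operators on C^T are represented by their matrices T -> T -> C. *)

Section Ops.
Variable R : rcfType.
Local Notation C := R[i].

Definition op (T : finType) := T -> T -> C.

Definition opmul (T : finType) (A B : op T) : op T :=
  fun x y => \sum_(z : T) A x z * B z y.

Definition opadj (T : finType) (A : op T) : op T :=
  fun x y => conjc (A y x).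

Definition optr (T : finType) (A : op T) : C := \sum_(x : T) A x x.

Definition opscale (T : finType) (c : C) (A : op T) : op T :=
  fun x y => c * A x y.

Definition opsum (T : finType) (J : finType) (F : J -> op T) : op T :=
  fun x y => \sum_(j : J) F j x y.

Definition is_hermitian (T : finType) (A : op T) : Prop :=
  forall x y, A x y = conjc (A y x).

Definition is_state (T : finType) (rho : op T) : Prop :=
  [/\ is_hermitian rho,
      forall v : T -> C, 0 <= \sum_(x : T) \sum_(y : T) conjc (v x) * rho x y * v y
    & optr rho = 1].

(* U_pi on H^{(x) n}:  U_pi (psi_1 .. psi_n) = psi_{pi^-1(1)} .. psi_{pi^-1(n)};
   on product basis vectors e_f, U_pi e_f = e_{f o pi^-1}. *)
Definition permop (I : finType) (n : nat) (pi : 'S_n) : op {ffun 'I_n -> I} :=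
  fun g f => (g == [ffun j => f ((pi^-1)%g j)])%:R.

Definition embed_at (I : finType) (n : nat) (i0 : 'I_n) (O : op I)
  : op {ffun 'I_n -> I} :=
  fun g f => O (g i0) (f i0) * [forall j, (j != i0) ==> (g j == f j)]%:R.

Definition tens_pow (I : finType) (n : nat) (rho : op I) : op {ffun 'I_n -> I} :=
  fun g f => \prod_(j < n) rho (g j) (f j).

Definition variance (I : finType) (n : nat) (rho : op I) (Q : op {ffun 'I_n -> I}) : C :=
  optr (opmul (opmul Q Q) (@tens_pow I n rho)) - (optr (opmul Q (@tens_pow I n rho))) ^+ 2.

End Ops.

(* cyclic shift on the first k elements (0-indexed: i -> i+1 for i+1 < k,
   k-1 -> 0, fixed otherwise); k is truncated at n so the map is always a
   permutation (only used with k <= n). *)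
Local Open Scope nat_scope.
Definition shift_nat (n k i : nat) : nat :=
  if i.+1 < minn k n then i.+1 else if i.+1 == minn k n then 0 else i.

Lemma shift_nat_lt n k (i : 'I_n) : shift_nat n k i < n.
Proof.
rewrite /shift_nat; have := ltn_ord i; have := geq_minr k n.
case: ifP => [h1|_] h2 h3; first by lia.
by case: ifP => _; lia.
Qed.

Definition shift_fun (n k : nat) (i : 'I_n) : 'I_n := Ordinal (shift_nat_lt k i).

Lemma shift_fun_inj n k : injective (@shift_fun n k).
Proof.
move=> [i hi] [j hj] /(congr1 val) /=; rewrite /shift_nat => h.
apply: val_inj => /=; move: h.
case: ifP => a; case: ifP => b; try case: ifP => c; try case: ifP => d;
  move/eqP: a; move/eqP: b; try move/eqP: c; try move/eqP: d; lia.
Qed.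

Definition shift_perm (n k : nat) : 'S_n := perm (@shift_fun_inj n k).

Local Open Scope ring_scope.
Section Norm.
Variable R : realType.
Local Notation C := R[i].

Definition vnorm (I : finType) (v : I -> C) : R :=
  Num.sqrt (\sum_(x : I) ((complex.Re (v x)) ^+ 2 + (complex.Im (v x)) ^+ 2)).

Definition opnorm (I : finType) (O : op R I) : R :=
  sup [set r : R | exists v : I -> C,
         vnorm v = 1 /\ r = vnorm (fun x => \sum_(y : I) O x y * v y)].

Definition O_k (I : finType) (n : nat) (hn : (0 < n)%N) (k : nat) (O : op R I)
  : op R {ffun 'I_n -> I} :=
  opscale (n`!%:R)^-1
    (opsum (fun pi : 'S_n =>
       opmul (opmul (opmul (@permop R I n pi) (@permop R I n (shift_perm n k)))
                    (@embed_at R I n (Ordinal hn) O))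
             (opadj (@permop R I n pi)))).

End Norm.

(* Main.v *)
Require Import Defs.
From HB Require Import structures.
From mathcomp Require Import all_boot all_order all_algebra all_fingroup.
From mathcomp Require Import complex.
From mathcomp Require Import classical_sets reals.
From mathcomp Require Import zify.
From mathcomp.algebra_tactics Require Import ring lra.
Import Order.TTheory GRing.Theory Num.Theory.
Local Open Scope ring_scope.
Local Open Scope complex_scope.
Set Implicit Arguments. Unset Strict Implicit. Unset Printing Implicit Defensive.

Local Open Scope nat_scope.
Ltac split_ifs := repeat match goal with |- context [if ?c then _ else _] =>
  lazymatch c with context [if _ then _ else _] => fail | _ => let H := fresh "H" in case H: c end end.

Section Nat.
Variables (n k : nat).
Hypothesis hk1 : 0 < k.
Hypothesis hkn : k <= n.

Lemma minkn : minn k n = k.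
Proof. by apply/minn_idPl. Qed.

Lemma sh_lt i : i < k -> shift_nat n k i < k.
Proof. by rewrite /shift_nat minkn; repeat case: ifP => ?; lia. Qed.

Lemma sh_ge i : k <= i -> shift_nat n k i = i.
Proof. by rewrite /shift_nat minkn; repeat case: ifP => ? /=; lia. Qed.

End Nat.

Definition rr_nat (n k i : nat) : nat :=
  if i < minn k n then (if minn k n == 1 then 0 else if i <= 1 then 1 - i else (minn k n).+1 - i)
  else i.

Lemma rr_lt n k (i : 'I_n) : rr_nat n k i < n.
Proof.
rewrite /rr_nat; have := ltn_ord i; have := geq_minr k n.
by case: ifP => a; try case: ifP => b; try case: ifP => c; lia.
Qed.

Definition rr_fun n k (i : 'I_n) : 'I_n := Ordinal (rr_lt k i).

Lemma rr_inj n k : injective (@rr_fun n k).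
Proof.
move=> [i hi] [j hj] /(congr1 val) /=; rewrite /rr_nat => h; apply: val_inj => /=; move: h.
have := geq_minr k n.
case: ifP => a; case: ifP => b; try case: ifP => c; try case: ifP => d; try case: ifP => e;
  try case: ifP => f; lia.
Qed.

Definition rperm n k : 'S_n := perm (@rr_inj n k).

Lemma rr_id n k i : i < n -> 0 < minn k n ->
  shift_nat n k (rr_nat n k (shift_nat n k i)) = rr_nat n k i.
Proof.
rewrite /shift_nat /rr_nat => hi hm.
set m := minn k n.
have hmn : m <= n by rewrite /m geq_minr.
split_ifs; lia.
Qed.

Lemma rr_s0 n k : 0 < minn k n -> rr_nat n k (shift_nat n k 0) = 0.
Proof.
rewrite /shift_nat /rr_nat => hm; set m := minn k n.
split_ifs; lia.
Qed.

Lemma rr_0 n k : 0 < minn k n -> rr_nat n k 0 = shift_nat n k 0.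
Proof.
rewrite /shift_nat /rr_nat => hm; set m := minn k n.
split_ifs; lia.
Qed.

Lemma rot_lt n (c i : 'I_n) : (if i + c < n then i + c else i + c - n) < n.
Proof. have := ltn_ord i; have := ltn_ord c; case: ifP => a; lia. Qed.

Definition rot_fun n (c i : 'I_n) : 'I_n := Ordinal (rot_lt c i).

Lemma rot_inj n (c : 'I_n) : injective (rot_fun c).
Proof.
move=> [i hi] [j hj] /(congr1 val) /= h; apply: val_inj => /=; move: h.
have := ltn_ord c; case: ifP => a; case: ifP => b; lia.
Qed.

Definition rot n (c : 'I_n) : 'S_n := perm (@rot_inj n c).

Lemma rot_block n (c : 'I_n) k (i : 'I_n) : c + k <= n ->
  (c <= rot c i < c + k) = (i < k).
Proof.
move=> h; rewrite /rot permE /= /rot_fun /=; have := ltn_ord i.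
by case: ifP => a; case: (ltnP i k) => b; lia.
Qed.

Lemma blocks_disj k j l q : j != l -> (j * k <= q < j * k + k) -> ~~ (l * k <= q < l * k + k).
Proof.
move=> jl /andP [a b]; apply/negP => /andP [c d].
case: (ltngtP j l) jl => // hjl _.
  have : j.+1 * k <= l * k by rewrite leq_mul2r hjl orbT.
  by rewrite mulSn; lia.
have : l.+1 * k <= j * k by rewrite leq_mul2r hjl orbT.
by rewrite mulSn; lia.
Qed.

Local Open Scope ring_scope.

Section Tens.
Variables (R : realType) (I : finType) (n : nat) (rho : op R I).
Local Notation C := R[i].
Local Notation T := {ffun 'I_n -> I}.
Local Notation rn := (@tens_pow R I n rho).

Lemma sum_ind (U : finType) (w : U) (G : U -> C) :
  \sum_(z : U) ((z == w)%:R * G z) = G w.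
Proof.
rewrite (bigD1 w) //= eqxx mul1r big1 ?addr0 // => z /negbTE ->; by rewrite mul0r.
Qed.

Definition om (X : op R T) : C := \sum_(g : T) \sum_(z : T) X g z * rn z g.

Lemma omE X : optr (opmul X rn) = om X.
Proof. by []. Qed.

Definition pf (p : 'S_n) (g : T) : T := [ffun j => g (p j)].
Lemma pfM p q g : pf p (pf q g) = pf (p * q) g.
Proof. by apply/ffunP => j; rewrite !ffunE permM. Qed.
Lemma pf1 g : pf 1 g = g.
Proof. by apply/ffunP => j; rewrite !ffunE perm1. Qed.
Lemma pfK p : cancel (pf p) (pf p^-1).
Proof. by move=> g; rewrite pfM mulVg pf1. Qed.
Lemma pf_inj p : injective (pf p).
Proof. exact: can_inj (pfK p). Qed.
Lemma sum_pf p (G : T -> C) : \sum_g G (pf p g) = \sum_g G g.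
Proof. by rewrite [RHS](reindex_inj (@pf_inj p)). Qed.
Lemma rn_pf p f g : rn (pf p f) (pf p g) = rn f g.
Proof.
rewrite /tens_pow; under eq_bigr do rewrite !ffunE.
by rewrite [RHS](reindex_inj (@perm_inj _ p)).
Qed.

Definition cj p (X : op R T) : op R T := fun g f => X (pf p g) (pf p f).
Lemma cjM p q X g f : cj p (cj q X) g f = cj (q * p) X g f.
Proof. by rewrite /cj !pfM. Qed.

Lemma om_cj p X : om (cj p X) = om X.
Proof.
rewrite /om /cj [RHS](reindex_inj (@pf_inj p)); apply: eq_bigr => g _.
rewrite [RHS](reindex_inj (@pf_inj p)); apply: eq_bigr => z _; by rewrite rn_pf.
Qed.

Definition F (X Y : op R T) : C :=
  \sum_(t : T * T * T) conjc (X t.1.1 t.1.2) * Y t.1.1 t.2 * rn t.2 t.1.2.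

Lemma F_om X Y : F X Y = om (opmul (opadj X) Y).
Proof.
rewrite /F /om /opmul /opadj.
have -> : \sum_(t : T * T * T) conjc (X t.1.1 t.1.2) * Y t.1.1 t.2 * rn t.2 t.1.2
  = \sum_(p : T * T) \sum_(z : T) conjc (X p.1 p.2) * Y p.1 z * rn z p.2.
  by rewrite pair_bigA.
rewrite -(pair_bigA _ (fun w g => \sum_(z : T) conjc (X w g) * Y w z * rn z g)) /=.
rewrite exchange_big /=; apply: eq_bigr => g _.
rewrite exchange_big /=; apply: eq_bigr => z _.
by rewrite big_distrl.
Qed.


Lemma F_nest X Y : F X Y =
  \sum_(w : T) \sum_(g : T) \sum_(z : T) conjc (X w g) * Y w z * rn z g.
Proof.
rewrite /F.
have -> : \sum_(t : T * T * T) conjc (X t.1.1 t.1.2) * Y t.1.1 t.2 * rn t.2 t.1.2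
  = \sum_(p : T * T) \sum_(z : T) conjc (X p.1 p.2) * Y p.1 z * rn z p.2.
  by rewrite pair_bigA.
by rewrite -(pair_bigA _ (fun w g => \sum_(z : T) conjc (X w g) * Y w z * rn z g)).
Qed.

Lemma F_ext X X' Y Y' : (forall u v, X u v = X' u v) -> (forall u v, Y u v = Y' u v) ->
  F X Y = F X' Y'.
Proof. by move=> hX hY; apply: eq_bigr => t _; rewrite hX hY. Qed.

Lemma om_ext X X' : (forall u v, X u v = X' u v) -> om X = om X'.
Proof. by move=> hX; apply: eq_bigr => g _; apply: eq_bigr => z _; rewrite hX. Qed.

Lemma F_sum (J K : finType) (X : J -> op R T) (Y : K -> op R T) :
  F (fun u v => \sum_(i : J) X i u v) (fun u v => \sum_(l : K) Y l u v)
  = \sum_(i : J) \sum_(l : K) F (X i) (Y l).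
Proof.
rewrite /F.
under eq_bigr => t _ do rewrite rmorph_sum big_distrl /= big_distrl /=.
rewrite exchange_big /=; apply: eq_bigr => i _.
under eq_bigr => t _ do rewrite big_distrr /= big_distrl /=.
rewrite exchange_big /=; apply: eq_bigr => l _.
by apply: eq_bigr => t _; rewrite ?mulrA.
Qed.

Lemma F_scale a b X Y :
  F (fun u v => a * X u v) (fun u v => b * Y u v) = conjc a * b * F X Y.
Proof.
rewrite /F big_distrr /=; apply: eq_bigr => t _.
by rewrite rmorphM /=; ring.
Qed.

Definition I1 : op R T := fun u v => (u == v)%:R.

Lemma F_1l Y : F I1 Y = om Y.
Proof.
rewrite F_om; apply: om_ext => g z; rewrite /opmul /opadj /I1.
rewrite -[RHS](sum_ind g (fun w => Y w z)); apply: eq_bigr => w _.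
by rewrite conjc_nat.
Qed.

Hypothesis rho_herm : is_hermitian rho.
Hypothesis rho_tr : optr rho = 1.

Lemma rn_herm f g : conjc (rn f g) = rn g f.
Proof.
rewrite /tens_pow rmorph_prod; apply: eq_bigr => j _.
by rewrite [in RHS]rho_herm.
Qed.

Lemma rn_tr : \sum_(g : T) rn g g = 1.
Proof.
rewrite /tens_pow -(bigA_distr_bigA (fun (j : 'I_n) (x : I) => rho x x)).
by rewrite big1 // => j _; exact: rho_tr.
Qed.

Lemma om_I1 : om I1 = 1.
Proof.
rewrite /om -[RHS]rn_tr; apply: eq_bigr => g _.
by rewrite (eq_bigr (fun z => (z == g)%:R * rn z g)) ?sum_ind // => z _; rewrite /I1 eq_sym.
Qed.

Lemma om_adj X : om (opadj X) = conjc (om X).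
Proof.
rewrite /om /opadj rmorph_sum exchange_big /=; apply: eq_bigr => g _.
rewrite rmorph_sum; apply: eq_bigr => z _.
by rewrite rmorphM /= rn_herm.
Qed.

Lemma F_1r X : F X I1 = conjc (om X).
Proof.
rewrite F_om -om_adj; apply: om_ext => g z; rewrite /opmul /opadj /I1.
rewrite -[RHS](sum_ind z (fun w => conjc (X w g))); apply: eq_bigr => w _.
by rewrite mulrC.
Qed.


Lemma psd_decomp (U V : finType) (K : op R V) (D : U -> C) (W : U -> V -> C) :
  (forall t, 0 <= D t) -> (forall x y, K x y = \sum_t D t * W t x * conjc (W t y)) ->
  forall v : V -> C, 0 <= \sum_x \sum_y conjc (v x) * K x y * v y.
Proof.
move=> D0 hK v.
have -> : \sum_x \sum_y conjc (v x) * K x y * v y =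
  \sum_t D t * ((conjc (\sum_y conjc (W t y) * v y)) * (\sum_y conjc (W t y) * v y)).
  under eq_bigr => x _ do under eq_bigr => y _ do
    rewrite hK big_distrr big_distrl /=.
  under eq_bigr => x _ do rewrite exchange_big /=.
  rewrite exchange_big /=; apply: eq_bigr => t _.
  rewrite rmorph_sum big_distrl big_distrr /=; apply: eq_bigr => x _.
  rewrite big_distrr big_distrr /=; apply: eq_bigr => y _.
  rewrite rmorphM /= conjcK; ring.
apply: sumr_ge0 => t _; apply: mulr_ge0 => //.
by rewrite mulrC; exact: mul_conjC_ge0.
Qed.

Variables (J : finType) (d : J -> C) (u : J -> I -> C).
Hypothesis d_ge0 : forall i, 0 <= d i.
Hypothesis rho_dec : forall x y, rho x y = \sum_i d i * u i x * conjc (u i y).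

Lemma rn_dec (x y : T) : rn x y = \sum_(t : {ffun 'I_n -> J})
   (\prod_j d (t j)) * (\prod_j u (t j) (x j)) * conjc (\prod_j u (t j) (y j)).
Proof.
rewrite /tens_pow.
under eq_bigr => j _ do rewrite rho_dec.
rewrite bigA_distr_bigA /=; apply: eq_bigr => t _.
by rewrite rmorph_prod -!big_split.
Qed.

Lemma rn_psd (v : T -> C) : 0 <= \sum_x \sum_y conjc (v x) * rn x y * v y.
Proof.
apply: (@psd_decomp _ _ rn (fun t : {ffun 'I_n -> J} => \prod_j d (t j))
          (fun t x => \prod_j u (t j) (x j))) => [t|x y].
  by apply: prodr_ge0.
exact: rn_dec.
Qed.

Lemma F_ge0 X : 0 <= F X X.
Proof.
rewrite F_nest; apply: sumr_ge0 => w _.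
have := rn_psd (fun y => conjc (X w y)).
rewrite exchange_big /=.
congr (_ <= _); apply: eq_bigr => g _; apply: eq_bigr => z _.
by rewrite conjcK; ring.
Qed.

Lemma F_subsub X1 X2 Y1 Y2 :
  F (fun u v => X1 u v - X2 u v) (fun u v => Y1 u v - Y2 u v)
  = F X1 Y1 - F X1 Y2 - F X2 Y1 + F X2 Y2.
Proof.
rewrite /F -sumrB -sumrB -big_split /=; apply: eq_bigr => t _.
rewrite rmorphB /=; ring.
Qed.

Lemma sumc (K : finType) (c : C) : \sum_(i : K) c = #|K|%:R * c.
Proof. by rewrite sumr_const mulr_natl. Qed.

Lemma F_convex (K : finType) (Y : K -> op R T) :
  F (fun u v => \sum_i Y i u v) (fun u v => \sum_i Y i u v)
  <= #|K|%:R * \sum_i F (Y i) (Y i).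
Proof.
rewrite F_sum.
set S := \sum_i F (Y i) (Y i).
set G := \sum_i \sum_l F (Y i) (Y l).
have h0 : 0 <= \sum_(i : K) \sum_(l : K)
   F (fun u v => Y i u v - Y l u v) (fun u v => Y i u v - Y l u v).
  by apply: sumr_ge0 => i _; apply: sumr_ge0 => l _; exact: F_ge0.
have E : \sum_(i : K) \sum_(l : K)
   F (fun u v => Y i u v - Y l u v) (fun u v => Y i u v - Y l u v)
   = 2%:R * (#|K|%:R * S - G).
  under eq_bigr => i _ do under eq_bigr => l _ do rewrite F_subsub.
  under eq_bigr => i _ do rewrite big_split /= sumrB sumrB sumc.
  rewrite big_split /= sumrB sumrB /=.
  have e1 : \sum_(i : K) \sum_(l : K) F (Y l) (Y i) = G.
    by rewrite /G exchange_big.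
  have e2 : \sum_(i : K) \sum_(l : K) F (Y l) (Y l) = #|K|%:R * S.
    by rewrite sumc.
  rewrite e1 e2 -/G.
  have e3 : \sum_(i : K) #|K|%:R * F (Y i) (Y i) = #|K|%:R * S.
    by rewrite /S -big_distrr.
  rewrite e3; ring.
by rewrite -subr_ge0; move: h0; rewrite E pmulr_rge0 // ltr0n.
Qed.

Definition eqoff (S : pred 'I_n) (g f : T) : bool := [forall q, ~~ S q ==> (g q == f q)].

Definition supp (S : pred 'I_n) (X : op R T) : Prop :=
  (forall g f, ~~ eqoff S g f -> X g f = 0) /\
  (forall g g' f f' : T, (forall q, S q -> g q = g' q) -> (forall q, S q -> f q = f' q) ->
     eqoff S g f -> eqoff S g' f' -> X g f = X g' f').

Definition merge (S : pred 'I_n) (a b : T) : T := [ffun q => if S q then a q else b q].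

Section Factor.
Variables (S : pred 'I_n) (x0 : T).
Local Notation pS g := (merge S g x0).
Local Notation pC g := (merge S x0 g).

Lemma split_sum (Phi : T -> T -> C) :
  \sum_(g : T) Phi (pS g) (pC g) =
  \sum_(a | pS a == a) \sum_(b | pC b == b) Phi a b.
Proof.
rewrite pair_big_dep /=.
rewrite (reindex_onto (fun g : T => (pS g, pC g)) (fun p : T * T => merge S p.1 p.2)) /=.
  apply: eq_bigl => g; apply/esym/andP; split; first (apply/andP; split).
  - by apply/eqP/ffunP => q; rewrite !ffunE; case: (S q).
  - by apply/eqP/ffunP => q; rewrite !ffunE; case: (S q).
  - by apply/eqP/ffunP => q; rewrite !ffunE; case: (S q).
move=> [a b] /= /andP [/eqP ha /eqP hb]; congr (_, _).
- by rewrite -{2}ha; apply/ffunP => q; rewrite !ffunE; case: (S q).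
- by rewrite -{2}hb; apply/ffunP => q; rewrite !ffunE; case: (S q).
Qed.

Lemma split_sum2 (al be : T -> T -> C) :
  \sum_(g : T) \sum_(f : T) al (pS g) (pS f) * be (pC g) (pC f) =
  (\sum_(a | pS a == a) \sum_(a' | pS a' == a') al a a') *
  (\sum_(b | pC b == b) \sum_(b' | pC b' == b') be b b').
Proof.
under eq_bigr => g _ do
  rewrite (split_sum (fun a' b' => al (pS g) a' * be (pC g) b')).
rewrite (split_sum (fun a b => \sum_(a' | pS a' == a') \sum_(b' | pC b' == b')
   al a a' * be b b')).
rewrite big_distrl /=; apply: eq_bigr => a _.
rewrite big_distrl /= exchange_big /=; apply: eq_bigr => b _.
rewrite big_distrr /=; apply: eq_bigr => a' _.
by rewrite big_distrr.
Qed.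

Lemma supp_norm (S' : pred 'I_n) X : supp S' X ->
  forall g f, X g f = X (merge S' g x0) (merge S' f x0) * (eqoff S' g f)%:R.
Proof.
move=> [h1 h2] g f; case: (boolP (eqoff S' g f)) => h; last by rewrite mulr0 h1.
rewrite mulr1; apply: h2 => //.
- by move=> q Sq; rewrite ffunE Sq.
- by move=> q Sq; rewrite ffunE Sq.
- by apply/forallP => q; apply/implyP => nq; rewrite !ffunE (negbTE nq).
Qed.

Lemma mergeC g : merge (fun q => ~~ S q) g x0 = pC g.
Proof. by apply/ffunP => q; rewrite !ffunE; case: (S q). Qed.

Lemma eqoff_pC g f : eqoff S g f = (pC g == pC f).
Proof.
apply/forallP/eqP => [h|h].
  apply/ffunP => q; rewrite !ffunE; case: (boolP (S q)) => // nq.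
  by have /implyP/(_ nq)/eqP := h q.
move=> q; apply/implyP => nq; have := congr1 (fun h : T => h q) h.
by rewrite !ffunE (negbTE nq) => ->.
Qed.

Lemma eqoff_pS g f : eqoff (fun q => ~~ S q) g f = (pS g == pS f).
Proof.
apply/forallP/eqP => [h|h].
  apply/ffunP => q; rewrite !ffunE; case: (boolP (S q)) => // nq.
  by have /implyP := h q; rewrite nq => /(_ isT)/eqP.
move=> q; apply/implyP; rewrite negbK => nq; have := congr1 (fun h : T => h q) h.
by rewrite !ffunE nq => ->.
Qed.

Definition rS (a b : T) := \prod_(q | S q) rho (a q) (b q).
Definition rC (a b : T) := \prod_(q | ~~ S q) rho (a q) (b q).

Lemma rn_split f g : rn f g = rS (pS f) (pS g) * rC (pC f) (pC g).
Proof.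
rewrite /tens_pow (bigID S) /=; congr (_ * _); apply: eq_bigr => q hq;
  by rewrite !ffunE ?(negbTE hq) ?hq.
Qed.

Lemma factor_x0 X Y : supp S X -> supp (fun q => ~~ S q) Y ->
  om (opmul X Y) = om X * om Y.
Proof.
move=> hX hY.
have kX := supp_norm hX; have kY := supp_norm hY.
have e1 : forall g f, \sum_z X g z * Y z f = X (pS g) (pS f) * Y (pC g) (pC f).
  move=> g f.
  have <- : pS (merge S f g) = pS f by apply/ffunP => q; rewrite !ffunE; case: (S q).
  have <- : pC (merge S f g) = pC g by apply/ffunP => q; rewrite !ffunE; case: (S q).
  rewrite -[RHS](sum_ind (merge S f g) (fun z => X (pS g) (pS z) * Y (pC z) (pC f))).
  apply: eq_bigr => z _; rewrite kX kY !mergeC.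
  have -> : (z == merge S f g) = eqoff S g z && eqoff (fun q => ~~ S q) z f.
    apply/eqP/andP => [->|[/forallP h1 /forallP h2]].
      split; apply/forallP => q; apply/implyP => hq; rewrite ffunE.
        by rewrite (negbTE hq).
      by rewrite negbK in hq; rewrite hq.
    apply/ffunP => q; rewrite ffunE; case: (boolP (S q)) => hq.
      by have /implyP := h2 q; rewrite hq => /(_ isT)/eqP.
    by have /implyP/(_ hq)/eqP := h1 q.
  by rewrite -mulnb natrM; ring.
pose al (a a' : T) := X a a' * rS a' a.
pose be (b b' : T) := Y b b' * rC b' b.
pose ga (b b' : T) := (b == b')%:R * rC b' b.
pose de (a a' : T) := (a == a')%:R * rS a' a.
have hXY : om (opmul X Y) = \sum_g \sum_f al (pS g) (pS f) * be (pC g) (pC f).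
  rewrite /om /opmul; apply: eq_bigr => g _; apply: eq_bigr => f _.
  by rewrite e1 rn_split /al /be; ring.
have hX' : om X = \sum_g \sum_f al (pS g) (pS f) * ga (pC g) (pC f).
  rewrite /om; apply: eq_bigr => g _; apply: eq_bigr => f _.
  by rewrite kX rn_split /al /ga -eqoff_pC; ring.
have hY' : om Y = \sum_g \sum_f de (pS g) (pS f) * be (pC g) (pC f).
  rewrite /om; apply: eq_bigr => g _; apply: eq_bigr => f _.
  by rewrite kY rn_split /de /be !mergeC -eqoff_pS; ring.
have h1 : \sum_(g : T) \sum_(f : T) de (pS g) (pS f) * ga (pC g) (pC f) = 1.
  rewrite -rn_tr; apply: eq_bigr => g _.
  rewrite -(sum_ind g (fun f => rn f g)); apply: eq_bigr => f _.
  rewrite /de /ga rn_split.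
  have -> : (f == g) = (pS g == pS f) && (pC g == pC f).
    apply/eqP/andP => [->|[/eqP h1 /eqP h2]]; first by [].
    apply/ffunP => q; have := congr1 (fun h : T => h q) h1; have := congr1 (fun h : T => h q) h2.
    by rewrite !ffunE; case: (S q) => [_ ->|-> _].
  by rewrite -mulnb natrM; ring.
rewrite hXY hX' hY' !split_sum2.
move: h1; rewrite split_sum2 => h1.
set Pa := \sum_(a | pS a == a) \sum_(a' | pS a' == a') al a a'.
set Pb := \sum_(b | pC b == b) \sum_(b' | pC b' == b') be b b'.
set Pg := \sum_(b | pC b == b) \sum_(b' | pC b' == b') ga b b'.
set Pd := \sum_(a | pS a == a) \sum_(a' | pS a' == a') de a a'.
by transitivity (Pa * Pb * (Pd * Pg)); [rewrite h1 mulr1 | ring].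
Qed.

End Factor.

Lemma factor S X Y : supp S X -> supp (fun q => ~~ S q) Y ->
  om (opmul X Y) = om X * om Y.
Proof.
case: (pickP (fun _ : T => true)) => [x0 _|hT]; first exact: factor_x0.
have e : forall Z, om Z = 0 by move=> Z; rewrite /om big1 // => g; have := hT g.
by rewrite !e mulr0.
Qed.

Lemma eqoff_sym S g f : eqoff S g f = eqoff S f g.
Proof. by apply: eq_forallb => q; rewrite eq_sym. Qed.

Lemma supp_adj S X : supp S X -> supp S (opadj X).
Proof.
move=> [h1 h2]; split.
  by move=> g f h; rewrite /opadj h1 ?conjc0 // eqoff_sym.
move=> g g' f f' hg hf e e'; rewrite /opadj; congr conjc.
by apply: h2 => //; rewrite eqoff_sym.
Qed.

Lemma supp_sub (S S' : pred 'I_n) X : (forall q, S q -> S' q) -> supp S X -> supp S' X.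
Proof.
move=> sub [h1 h2]; split.
  move=> g f h; apply: h1; apply: contra h => /forallP e; apply/forallP => q.
  by apply/implyP => nq; have /implyP := e q; apply; apply: contra nq; exact: sub.
move=> g g' f f' hg hf /forallP e /forallP e'.
have E1 : eqoff S g f = eqoff S g' f'.
  apply/forallP/forallP => h q; apply/implyP => nq;
    have /implyP/(_ nq)/eqP := h q; case: (boolP (S' q)) => hq.
  - by rewrite hg // hf // => ->.
  - by have /implyP/(_ hq)/eqP := e' q => ->.
  - by rewrite -hg // -hf // => ->.
  - by have /implyP/(_ hq)/eqP := e q => ->.
case: (boolP (eqoff S g f)) => h.
  apply: h2 => //; [by move=> q /sub; apply: hg|by move=> q /sub; apply: hf|by rewrite -E1].
by rewrite !h1 // -E1.
Qed.

Lemma F_cj p X Y : F (cj p X) (cj p Y) = F X Y.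
Proof.
rewrite !F_om -(om_cj p (opmul (opadj X) Y)); apply: om_ext => g f.
rewrite /opmul /opadj /cj.
by rewrite -(sum_pf p (fun w => conjc (X w (pf p g)) * Y w (pf p f))).
Qed.

Lemma om_lin (K : finType) a (X : K -> op R T) :
  om (fun g f => a * \sum_i X i g f) = a * \sum_i om (X i).
Proof.
rewrite /om.
transitivity (\sum_i \sum_g \sum_z a * X i g z * rn z g).
  rewrite [RHS]exchange_big /=; apply: eq_bigr => g _.
  rewrite [RHS]exchange_big /=; apply: eq_bigr => z _.
  by rewrite big_distrr big_distrl.
rewrite big_distrr /=; apply: eq_bigr => i _.
rewrite big_distrr /=; apply: eq_bigr => g _.
rewrite big_distrr /=; apply: eq_bigr => z _.
by rewrite mulrA.
Qed.

Lemma F_scalel a X Y : F (fun u v => a * X u v) Y = conjc a * F X Y.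
Proof.
transitivity (F (fun u v => a * X u v) (fun u v => 1 * Y u v)).
  by apply: F_ext => // x y; rewrite mul1r.
by rewrite F_scale mulr1.
Qed.

Lemma F_scaler b X Y : F X (fun u v => b * Y u v) = b * F X Y.
Proof.
transitivity (F (fun u v => 1 * X u v) (fun u v => b * Y u v)).
  by apply: F_ext => // x y; rewrite mul1r.
by rewrite F_scale conjc1 mul1r.
Qed.

Lemma F_center a b X Y :
  F (fun u v => X u v - a * I1 u v) (fun u v => Y u v - b * I1 u v)
  = F X Y - b * conjc (om X) - conjc a * om Y + conjc a * b.
Proof.
rewrite F_subsub F_scalel F_scaler F_scalel F_scaler !F_1l F_1r om_I1.
ring.
Qed.

Lemma permop_mul p X g f : opmul (@permop R I n p) X g f = X (pf p g) f.
Proof.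
rewrite /opmul /permop -[RHS](sum_ind (pf p g) (fun z => X z f)); apply: eq_bigr => z _.
have -> : (g == [ffun j => z ((p^-1)%g j)]) = (z == pf p g); last by [].
apply/idP/idP => /eqP ->; apply/eqP/ffunP => j; by rewrite !ffunE ?permK ?permKV.
Qed.

Lemma mul_adjpermop p X g f : opmul X (opadj (@permop R I n p)) g f = X g (pf p f).
Proof.
rewrite /opmul /opadj /permop -[RHS](sum_ind (pf p f) (fun z => X g z)).
apply: eq_bigr => z _; rewrite conjc_nat mulrC.
have -> : (f == [ffun j => z ((p^-1)%g j)]) = (z == pf p f); last by [].
apply/idP/idP => /eqP ->; apply/eqP/ffunP => j; by rewrite !ffunE ?permK ?permKV.
Qed.

Lemma sum_mulg (G : 'S_n -> C) (r : 'S_n) : \sum_(p : 'S_n) G (r * p)%g = \sum_p G p.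
Proof. by rewrite [RHS](reindex_inj (mulgI r)). Qed.

Variables (O : op R I) (k : nat).
Hypothesis O_herm : is_hermitian O.
Hypotheses (hn : (0 < n)%N) (hk1 : (0 < k)%N) (hkn : (k <= n)%N).

Local Notation o0 := (Ordinal hn).
Local Notation E := (@embed_at R I n (Ordinal hn) O).
Local Notation s := (shift_perm n k).

Definition B : op R T := fun g f => E (pf s g) f.

Lemma BE g f : B g f =
  O (g (s o0)) (f o0) * [forall j, (j != o0) ==> (g (s j) == f j)]%:R.
Proof.
rewrite /B /embed_at !ffunE.
have -> : [forall j, (j != o0) ==> (pf s g j == f j)] = [forall j, (j != o0) ==> (g (s j) == f j)].
  by apply: eq_forallb => j; rewrite ffunE.
by [].
Qed.

Lemma Ok_E g f : O_k hn k O g f = (n`!%:R)^-1 * \sum_(p : 'S_n) cj p B g f.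
Proof.
rewrite /O_k /opscale /opsum; congr (_ * _); apply: eq_bigr => p _.
rewrite mul_adjpermop.
transitivity (opmul (@permop R I n s) E (pf p g) (pf p f)).
  by apply: eq_bigr => z _; rewrite permop_mul.
by rewrite permop_mul.
Qed.

Local Notation r := (rperm n k).

Lemma hm0 : (0 < minn k n)%N.
Proof. by rewrite leq_min hk1 hn. Qed.

Lemma rs0 : r (s o0) = o0.
Proof. by apply: val_inj; rewrite /= !permE /= rr_s0 // hm0. Qed.

Lemma r0 : r o0 = s o0.
Proof. by apply: val_inj; rewrite /= !permE /= rr_0 // hm0. Qed.

Lemma srs j : s (r (s j)) = r j.
Proof. by apply: val_inj; rewrite /= !permE /= rr_id // ?hm0. Qed.

Lemma B_r g f : B (pf r g) (pf r f) = conjc (B f g).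
Proof.
rewrite !BE rmorphM /= conjc_nat !ffunE rs0 r0 -O_herm.
congr (_ * _%:R); congr nat_of_bool.
apply/forallP/forallP => h j; apply/implyP => hj.
  set i := ((s^-1)%g ((r^-1)%g j)).
  have ei : r (s i) = j by rewrite /i !permKV.
  have hi : i != o0 by apply: contra hj => /eqP ei0; rewrite -ei ei0 rs0.
  have /implyP /(_ hi) := h i; rewrite !ffunE ei.
  have -> : r i = s j by rewrite -srs ei.
  by rewrite eq_sym.
have hi : r (s j) != o0.
  apply: contra hj => /eqP e; apply/eqP; apply: (@perm_inj _ s); apply: (@perm_inj _ r).
  by rewrite e rs0.
have /implyP /(_ hi) := h (r (s j)); rewrite !ffunE srs.
by rewrite eq_sym.
Qed.

Lemma conj_invn (m : nat) : conjc ((m%:R : C)^-1) = (m%:R)^-1.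
Proof. by rewrite conjc_inv conjc_nat. Qed.

Lemma Ok_herm g f : O_k hn k O g f = conjc (O_k hn k O f g).
Proof.
rewrite !Ok_E rmorphM /= conj_invn rmorph_sum; congr (_ * _).
rewrite -(sum_mulg _ r); apply: eq_bigr => p _.
by rewrite /cj -!pfM B_r.
Qed.

Lemma s_lt (i : 'I_n) : (i < k)%N -> (s i < k)%N.
Proof. by rewrite /= permE /=; exact: sh_lt. Qed.

Lemma s_ge (i : 'I_n) : (k <= i)%N -> s i = i.
Proof. by move=> h; apply: val_inj; rewrite /= permE /= sh_ge. Qed.

Lemma supp_cjB (bt : 'S_n) (S : pred 'I_n) :
  (forall i, S (bt i) = (i < k)%N) -> supp S (cj bt B).
Proof.
move=> hS; split.
  move=> g f /forallPn [q]; rewrite negb_imply => /andP [nq neq].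
  rewrite /cj BE.
  have -> : [forall j, (j != o0) ==> (pf bt g (s j) == pf bt f j)] = false; last by rewrite mulr0.
  apply/negbTE/forallPn; exists ((bt^-1)%g q).
  set i := (bt^-1)%g q; have ei : bt i = q by rewrite /i permKV.
  have hik : (k <= i)%N by rewrite leqNgt -hS ei.
  rewrite negb_imply; apply/andP; split.
    by apply/eqP => e; move: hik; rewrite e /=; rewrite leqNgt hk1.
  by rewrite !ffunE (s_ge hik) ei.
move=> g g' f f' hg hf /forallP e /forallP e'; rewrite /cj !BE !ffunE.
have h0 : (0 < k)%N := hk1.
rewrite hg ?hS ?s_lt // hf ?hS //.
congr (_ * _%:R); congr nat_of_bool; apply: eq_forallb => i; rewrite !ffunE.
case: (ltnP i k) => hi.
  by rewrite hg ?hS ?s_lt // hf ?hS.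
rewrite (s_ge hi); have h1 := e (bt i); have h2 := e' (bt i).
by rewrite hS ltnNge hi /= in h1 h2; rewrite h1 h2.
Qed.

Local Notation m := (n %/ k)%N.

Lemma m_gt0 : (0 < m)%N.
Proof. by rewrite divn_gt0. Qed.

Lemma hjk (j : 'I_m) : (j * k + k <= n)%N.
Proof.
have h : (j.+1 <= n %/ k)%N := ltn_ord j.
rewrite leq_divRL // mulSn in h; lia.
Qed.

Lemma hjlt (j : 'I_m) : (j * k < n)%N.
Proof. have := hjk j; have := hk1; lia. Qed.

Definition cJ (j : 'I_m) : 'I_n := Ordinal (hjlt j).
Definition bt (j : 'I_m) : 'S_n := rot (cJ j).
Definition Sb (j : 'I_m) : pred 'I_n := fun q => (j * k <= q < j * k + k)%N.
Definition H (j : 'I_m) : op R T := cj (bt j) B.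

Lemma hSb j i : Sb j (bt j i) = (i < k)%N.
Proof. by rewrite /Sb /bt (@rot_block n (cJ j) k i (hjk j)). Qed.

Lemma supp_H j : supp (Sb j) (H j).
Proof. exact: supp_cjB (hSb j). Qed.

Lemma om_H j : om (H j) = om B.
Proof. exact: om_cj. Qed.

Lemma F_HH (j l : 'I_m) : j != l -> F (H j) (H l) = conjc (om B) * om B.
Proof.
move=> jl; rewrite F_om (@factor (Sb j)) ?om_adj ?om_H //.
  exact: supp_adj (supp_H j).
apply: (supp_sub _ (supp_H l)) => q hq.
by apply: (@blocks_disj k l j) => //; rewrite eq_sym.
Qed.

Lemma F_BB : F B B = F E E.
Proof.
rewrite !F_nest /B.
exact: (sum_pf s (fun w => \sum_g \sum_z conjc (E w g) * E w z * rn z g)).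
Qed.

Lemma F_HHd j : F (H j) (H j) = F E E.
Proof. by rewrite /H F_cj F_BB. Qed.

Lemma forall_prod (P : pred 'I_n) : ([forall j, P j] : nat)%:R = \prod_j ((P j : nat)%:R : C).
Proof.
case: (boolP [forall j, P j]) => [/forallP h | /forallPn [j hj]].
  by rewrite big1 // => j _; rewrite h.
by rewrite (bigD1 j) //= (negbTE hj) mul0r.
Qed.

Lemma prod_o0 (G : 'I_n -> C) : \prod_j G j = G o0 * \prod_(j | j != o0) G j.
Proof. exact: bigD1. Qed.

Definition GE (j : 'I_n) (a b c : I) : C :=
  if j == o0 then conjc (O a b) * O a c * rho c b
  else (a == b)%:R * (a == c)%:R * rho c b.

Lemma EE_prod w g z : conjc (E w g) * E w z * rn z g = \prod_j GE j (w j) (g j) (z j).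
Proof.
rewrite /embed_at rmorphM /= conjc_nat !forall_prod /tens_pow.
rewrite !prod_o0 /GE eqxx /= !mul1r.
have e1 : forall P : 'I_n -> bool, \prod_(j | j != o0) (((j != o0) ==> P j) : nat)%:R
    = \prod_(j | j != o0) ((P j : nat)%:R : C).
  by move=> P; apply: eq_bigr => j hj; rewrite hj.
have e2 : forall X Y : 'I_n -> C, \prod_(j | j != o0) (if j == o0 then X j else Y j)
    = \prod_(j | j != o0) Y j.
  by move=> X Y; apply: eq_bigr => j hj; rewrite (negbTE hj).
rewrite (e1 (fun j => w j == g j)) (e1 (fun j => w j == z j)).
rewrite (e2 (fun j => conjc (O (w j) (g j)) * O (w j) (z j) * rho (z j) (g j))
   (fun j => (w j == g j)%:R * (w j == z j)%:R * rho (z j) (g j))).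
rewrite !big_split /=; ring.
Qed.

Lemma sum3_prod (G : 'I_n -> I -> I -> I -> C) :
  \sum_(w : T) \sum_(g : T) \sum_(z : T) \prod_j G j (w j) (g j) (z j) =
  \prod_j \sum_a \sum_b \sum_c G j a b c.
Proof.
rewrite [RHS]bigA_distr_bigA /=; apply: eq_bigr => w _.
rewrite bigA_distr_bigA /=; apply: eq_bigr => g _.
by rewrite bigA_distr_bigA.
Qed.

Definition tau : C := \sum_a \sum_b \sum_c conjc (O a b) * O a c * rho c b.

Lemma FEE : F E E = tau.
Proof.
rewrite F_nest.
under eq_bigr => w _ do under eq_bigr => g _ do under eq_bigr => z _ do rewrite EE_prod.
rewrite sum3_prod prod_o0 [X in _ * X]big1 ?mulr1.
  by rewrite /tau /GE eqxx.
move=> j hj; rewrite /GE (negbTE hj).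
rewrite -[RHS]rho_tr /optr; apply: eq_bigr => a _.
rewrite (bigD1 a) //= [X in _ + X]big1 ?addr0.
  rewrite -(sum_ind a (fun c => rho c a)); apply: eq_bigr => c _.
  by rewrite eqxx mul1r eq_sym.
move=> b hb; rewrite big1 // => c _; by rewrite eq_sym (negbTE hb) mulr0n !mul0r.
Qed.

Lemma vnorm_sq (w : I -> C) : ((vnorm w ^+ 2)%:C)%C = \sum_x w x * conjc (w x).
Proof.
rewrite /vnorm sqr_sqrtr; last first.
  by apply: sumr_ge0 => x _; apply: addr_ge0; apply: sqr_ge0.
rewrite rmorph_sum; apply: eq_bigr => x _.
by rewrite -sqr_normc -add_Re2_Im2.
Qed.

Lemma vnorm_ge0 (w : I -> C) : 0 <= vnorm w.
Proof. exact: sqrtr_ge0. Qed.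

Lemma vnorm_eq1 (w : I -> C) : \sum_x w x * conjc (w x) = 1 -> vnorm w = 1.
Proof.
move=> h; have := vnorm_sq w; rewrite h => /(congr1 (@complex.Re R)) /= e.
have e' : vnorm w ^+ 2 = 1 ^+ 2 by rewrite expr1n e.
by move/eqP: e'; rewrite (eqrXn2 (n := 2)) ?vnorm_ge0 // => /eqP.
Qed.

Definition Kc : C := \sum_x (\sum_y `|O x y|) ^+ 2.

Lemma Ov_bound (v : I -> C) : vnorm v = 1 ->
  vnorm (fun x => \sum_y O x y * v y) <= Num.sqrt (complex.Re Kc).
Proof.
move=> hv.
have hsum : \sum_y v y * conjc (v y) = 1 by rewrite -vnorm_sq hv expr1n.
have hvy : forall y, `|v y| <= 1.
  move=> y; rewrite -(ler_pXn2r (n := 2)) ?nnegrE ?normr_ge0 ?ler01 // expr1n.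
  rewrite sqr_normc -hsum (bigD1 y) //= lerDl.
  by apply: sumr_ge0 => z _; exact: mul_conjC_ge0.
have hw : forall x, `|\sum_y O x y * v y| <= \sum_y `|O x y|.
  move=> x; apply: (le_trans (ler_norm_sum _ _ _)); apply: ler_sum => y _.
  by rewrite normrM; apply: ler_piMr => //; rewrite normr_ge0.
have Kc0 : 0 <= Kc.
  by apply: sumr_ge0 => x _; apply: exprn_ge0; apply: sumr_ge0 => y _; exact: normr_ge0.
have hK : ((vnorm (fun x => \sum_y O x y * v y) ^+ 2)%:C)%C <= Kc.
  rewrite vnorm_sq; apply: ler_sum => x _; rewrite -sqr_normc.
  apply: lerXn2r; rewrite ?nnegrE ?normr_ge0 ?hw //.
  by apply: sumr_ge0 => y _; exact: normr_ge0.
have hK' : vnorm (fun x => \sum_y O x y * v y) ^+ 2 <= complex.Re Kc.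
  by move: hK; rewrite -[X in _ <= X](RRe_real (ger0_real Kc0)) lecR.
have ReK : 0 <= complex.Re Kc by move: Kc0; rewrite lecE => /andP [_ h].
rewrite -(ler_pXn2r (n := 2)) ?nnegrE ?vnorm_ge0 ?sqrtr_ge0 //.
by rewrite [X in _ <= X]sqr_sqrtr.
Qed.

Lemma opnorm_ub (v : I -> C) : vnorm v = 1 ->
  vnorm (fun x => \sum_y O x y * v y) <= opnorm O.
Proof.
move=> hv; apply: sup_upper_bound; last by exists v.
split; first by exists (vnorm (fun x => \sum_y O x y * v y)), v.
exists (Num.sqrt (complex.Re Kc)) => r [w [hw ->]].
exact: Ov_bound.
Qed.

Hypothesis u_norm : forall i, \sum_x u i x * conjc (u i x) = 1.

Lemma d_sum : \sum_i d i = 1.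
Proof.
rewrite -rho_tr /optr; under [RHS]eq_bigr => x _ do rewrite rho_dec.
rewrite exchange_big /=; apply: eq_bigr => i _.
by rewrite -[LHS]mulr1 -(u_norm i) big_distrr /=; apply: eq_bigr => x _; rewrite mulrA.
Qed.

Lemma tau_dec : tau = \sum_i d i *
   \sum_a (\sum_c O a c * u i c) * conjc (\sum_b O a b * u i b).
Proof.
rewrite /tau.
transitivity (\sum_i \sum_a \sum_b \sum_c
   d i * (conjc (O a b) * conjc (u i b)) * (O a c * u i c)).
  under eq_bigr => a _ do under eq_bigr => b _ do under eq_bigr => c _ do
    rewrite rho_dec big_distrr /=.
  under eq_bigr => a _ do under eq_bigr => b _ do rewrite exchange_big /=.
  under eq_bigr => a _ do rewrite exchange_big /=.
  rewrite exchange_big /=; apply: eq_bigr => i _; apply: eq_bigr => a _.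
  apply: eq_bigr => b _; apply: eq_bigr => c _; ring.
apply: eq_bigr => i _; rewrite big_distrr /=; apply: eq_bigr => a _.
rewrite rmorph_sum mulrA big_distrr /=; apply: eq_bigr => b _.
rewrite big_distrr big_distrl /=; apply: eq_bigr => c _.
rewrite rmorphM /=; ring.
Qed.

Lemma tau_le : tau <= ((opnorm O ^+ 2)%:C)%C.
Proof.
rewrite tau_dec.
apply: (@le_trans _ _ (\sum_i d i * ((opnorm O ^+ 2)%:C)%C)).
  apply: ler_sum => i _; apply: ler_wpM2l => //.
  rewrite -(vnorm_sq (fun a => \sum_c O a c * u i c)).
  rewrite lecR; apply: lerXn2r; rewrite ?nnegrE ?vnorm_ge0 //.
    by apply: le_trans (opnorm_ub (vnorm_eq1 (u_norm i))); exact: vnorm_ge0.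
  exact: opnorm_ub (vnorm_eq1 (u_norm i)).
by rewrite -big_distrl /= d_sum mul1r.
Qed.

Local Notation Q := (O_k hn k O).
Local Notation c := (om B).
Local Notation a := ((n`!%:R : C)^-1).
Local Notation mi := ((m%:R : C)^-1).

Lemma nfact_neq0 : (n`!%:R : C) != 0.
Proof. by rewrite pnatr_eq0 -lt0n fact_gt0. Qed.

Lemma m_neq0 : (m%:R : C) != 0.
Proof. by rewrite pnatr_eq0 -lt0n m_gt0. Qed.

Lemma omQ : om Q = c.
Proof.
rewrite (om_ext (X' := fun g f => a * \sum_p cj p B g f)); last by move=> g f; rewrite Ok_E.
rewrite om_lin (eq_bigr (fun _ => c)); last by move=> p _; rewrite om_cj.
by rewrite sumc card_Sn mulrA mulVf ?mul1r // nfact_neq0.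
Qed.

Lemma c_real : conjc c = c.
Proof.
rewrite -omQ -om_adj; apply: om_ext => g f.
by rewrite /opadj -Ok_herm.
Qed.

Lemma var_eq : variance rho Q = F (fun u v => Q u v - c * I1 u v) (fun u v => Q u v - c * I1 u v).
Proof.
rewrite F_center omQ c_real /variance !omE.
have -> : F Q Q = om (opmul Q Q).
  rewrite F_om; apply: om_ext => g f; apply: eq_bigr => w _.
  by rewrite /opadj -Ok_herm.
rewrite omQ; ring.
Qed.

Definition W' : op R T := fun g f => mi * \sum_(j : 'I_m) (H j g f - c * I1 g f).

Lemma I1_pf p g f : I1 (pf p g) (pf p f) = I1 g f.
Proof. by rewrite /I1 (inj_eq (@pf_inj p)). Qed.

Lemma Qc_avg g f : Q g f - c * I1 g f = a * \sum_(p : 'S_n) cj p W' g f.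
Proof.
rewrite Ok_E.
transitivity (a * (mi * \sum_(j : 'I_m) \sum_(p : 'S_n)
    (cj (bt j * p) B g f - c * I1 g f))); last first.
  congr (_ * _); rewrite big_distrr /=.
  under eq_bigr => j _ do rewrite big_distrr /=.
  rewrite exchange_big /=; apply: eq_bigr => p _.
  rewrite {2}/cj /W' I1_pf big_distrr /=; apply: eq_bigr => j _.
  by rewrite /H /cj !pfM.
have e : forall j : 'I_m, \sum_(p : 'S_n) (cj (bt j * p) B g f - c * I1 g f)
    = \sum_(p : 'S_n) cj p B g f - n`!%:R * (c * I1 g f).
  by move=> j; rewrite sumrB (sum_mulg (fun p => cj p B g f)) sumc card_Sn.
rewrite (eq_bigr _ (fun j _ => e j)) sumc card_ord.
field; rewrite nfact_neq0 m_neq0 //.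
Qed.

Local Notation Q' := (fun u v => Q u v - c * I1 u v).

Lemma a_sq_ge0 : 0 <= conjc a * a.
Proof. by rewrite conj_invn; apply: mulr_ge0; rewrite invr_ge0 ler0n. Qed.

Lemma FQ_le : F Q' Q' <= F W' W'.
Proof.
rewrite (@F_ext Q' (fun g f => a * \sum_(p : 'S_n) cj p W' g f)
                 Q' (fun g f => a * \sum_(p : 'S_n) cj p W' g f)); try exact: Qc_avg.
rewrite F_scale.
apply: (@le_trans _ _ (conjc a * a * (#|{perm 'I_n}|%:R *
   \sum_(p : 'S_n) F (cj p W') (cj p W')))).
  by apply: ler_wpM2l; [exact: a_sq_ge0 | exact: (F_convex (fun p => cj p W'))].
rewrite (eq_bigr (fun _ => F W' W')); last by move=> p _; rewrite F_cj.
rewrite sumc card_Sn conj_invn.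
have -> : a * a * (n`!%:R * (n`!%:R * F W' W')) = F W' W'.
  by field; rewrite nfact_neq0.
by [].
Qed.

Local Notation G := (fun (j : 'I_m) u v => H j u v - c * I1 u v).

Lemma c_sq_ge0 : 0 <= c * c.
Proof. by rewrite -{2}c_real; exact: mul_conjC_ge0. Qed.

Lemma FG_off (j l : 'I_m) : j != l -> F (G j) (G l) = 0.
Proof. by move=> jl; rewrite F_center !om_H c_real F_HH // c_real; ring. Qed.

Lemma FG_diag (j : 'I_m) : F (G j) (G j) <= ((opnorm O ^+ 2)%:C)%C.
Proof.
rewrite F_center !om_H c_real F_HHd FEE.
apply: le_trans tau_le.
have := c_sq_ge0; rewrite -subr_ge0 => _.
rewrite -subr_ge0.
have -> : tau - (tau - c * c - c * c + c * c) = c * c by ring.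
exact: c_sq_ge0.
Qed.

Lemma FW_le : F W' W' <= ((opnorm O ^+ 2)%:C)%C * mi.
Proof.
rewrite /W' (@F_ext _ (fun g f => mi * \sum_(j : 'I_m) G j g f)
   _ (fun g f => mi * \sum_(j : 'I_m) G j g f)) // F_scale F_sum.
rewrite (eq_bigr (fun j => F (G j) (G j))); last first.
  move=> j _; rewrite (bigD1 j) //= big1 ?addr0 // => l hl.
  by apply: FG_off; rewrite eq_sym.
apply: (@le_trans _ _ (conjc mi * mi * (m%:R * ((opnorm O ^+ 2)%:C)%C))).
  apply: ler_wpM2l; first by rewrite conj_invn; apply: mulr_ge0; rewrite invr_ge0 ler0n.
  rewrite -[m in X in _ <= X]card_ord -sumc.
  by apply: ler_sum => j _; exact: FG_diag.
rewrite conj_invn.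
have -> : mi * mi * (m%:R * ((opnorm O ^+ 2)%:C)%C) = ((opnorm O ^+ 2)%:C)%C * mi.
  by field; rewrite m_neq0.
by [].
Qed.

Lemma m_bound : (n <= 2 * k * m)%N.
Proof.
have h1 := ltn_ceil n hk1; have h2 := m_gt0.
have h3 : (k <= m * k)%N by rewrite leq_pmull.
rewrite mulSn in h1; rewrite -mulnA (mulnC k); lia.
Qed.

Lemma var_final : variance rho Q <= ((((2 * k)%:R * opnorm O ^+ 2 / n%:R)%:C)%C).
Proof.
rewrite var_eq; apply: le_trans FQ_le _; apply: le_trans FW_le _.
set x := opnorm O ^+ 2.
have x0 : 0 <= x by apply: sqr_ge0.
have -> : ((x%:C)%C * mi) = ((x / m%:R)%:C)%C.
  by rewrite [RHS]rmorphM /= [in RHS]rmorphV ?unitfE ?pnatr_eq0 -?lt0n ?m_gt0 // rmorph_nat.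
rewrite lecR ler_pdivrMr ?ltr0n ?m_gt0 //.
rewrite mulrAC ler_pdivlMr ?ltr0n //.
rewrite [X in _ <= X]mulrAC -[X in _ <= X * _]natrM [X in _ <= X]mulrC.
apply: ler_wpM2l => //.
by rewrite ler_nat; have := m_bound; rewrite mulnC.
Qed.

End Tens.

Section Decomp.
Variables (R : realType) (I : finType) (rho : op R I).
Local Notation C := R[i].
Local Notation N := #|I|.

Lemma sumI (F : I -> C) : \sum_(x : I) F x = \sum_(i < N) F (enum_val i).
Proof. by rewrite -big_enum_val; apply: eq_bigl => x; rewrite inE. Qed.

Hypothesis hrho : is_state rho.

Definition Mr : 'M[C]_N := \matrix_(i, j) rho (enum_val i) (enum_val j).

Lemma Mr_herm : (Mr ^t*)%sesqui = Mr.
Proof.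
case: hrho => hh _ _.
by apply/matrixP => i j; rewrite !mxE [RHS]hh.
Qed.

Lemma Mr_normal : Mr \is normalmx.
Proof. by apply/normalmxP; rewrite Mr_herm. Qed.

Local Notation P := (spectralmx Mr).
Local Notation sp := (spectral_diag Mr).

Definition dd (i : 'I_N) : C := sp 0 i.
Definition uu (i : 'I_N) (x : I) : C := conjc (P i (enum_rank x)).

Lemma rho_dec' x y : rho x y = \sum_i dd i * uu i x * conjc (uu i y).
Proof.
have e : rho x y = Mr (enum_rank x) (enum_rank y) by rewrite mxE !enum_rankK.
rewrite e; have /orthomx_spectralP -> := Mr_normal.
rewrite invmx_unitary ?spectral_unitarymx // mul_mx_diag !mxE.
apply: eq_bigr => l _; rewrite !mxE /dd /uu conjcK; ring.
Qed.

Lemma uu_orth i l : \sum_x conjc (uu i x) * uu l x = (i == l)%:R.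
Proof.
have /unitarymxP hP := spectral_unitarymx Mr.
move/matrixP: hP => /(_ i l); rewrite !mxE => <-.
rewrite sumI; apply: eq_bigr => j _; rewrite /uu conjcK enum_valK !mxE.
by [].
Qed.

Lemma uu_norm i : \sum_x uu i x * conjc (uu i x) = 1.
Proof.
transitivity (\sum_x conjc (uu i x) * uu i x); last by rewrite uu_orth eqxx.
by apply: eq_bigr => x _; rewrite mulrC.
Qed.

Lemma dd_ge0 i : 0 <= dd i.
Proof.
case: hrho => _ hpsd _.
have := hpsd (uu i).
have -> : \sum_x \sum_y conjc (uu i x) * rho x y * uu i y = dd i; last by [].
under eq_bigr => x _ do under eq_bigr => y _ do rewrite rho_dec' big_distrr big_distrl /=.
under eq_bigr => x _ do rewrite exchange_big /=.
rewrite exchange_big /=.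
have e : forall j, \sum_x \sum_y conjc (uu i x) * (dd j * uu j x * conjc (uu j y)) * uu i y
   = dd j * (\sum_x conjc (uu i x) * uu j x) * (\sum_y conjc (uu j y) * uu i y).
  move=> j; rewrite big_distrr /= [LHS]exchange_big /=; apply: eq_bigr => y _.
  rewrite big_distrr big_distrl /=; apply: eq_bigr => x _; ring.
rewrite (eq_bigr _ (fun j _ => e j)).
rewrite (bigD1 i) //= !uu_orth eqxx mulr1 mulr1 big1 ?addr0 //.
by move=> j hj; rewrite !uu_orth eq_sym (negbTE hj) mulr0n !mulr0.
Qed.

End Decomp.

Local Open Scope ring_scope.
Local Open Scope complex_scope.

Theorem proposition2p20 (R : realType) (I : finType) (O rho : op R I)
  (n k : nat) (hn : (0 < n)%N) (hk1 : (1 <= k)%N) (hkn : (k <= n)%N) :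
  is_hermitian O -> is_state rho ->
  variance rho (O_k hn k O)
    <= ((2 * k)%:R * (opnorm O) ^+ 2 / n%:R)%:C.
Proof.
move=> hO hrho; have [hh _ htr] := hrho.
exact: (var_final hh htr (@dd_ge0 R I rho hrho) (@rho_dec' R I rho hrho) hO hn hk1 hkn (@uu_norm R I rho)).
Qed.
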